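(* Let $p\ge2$ and $q\ge2$, and let $\mathcal M_{\mathrm{reg}}$ and $\mathcal A_{\mathrm{class}}$ be as in the context. Then $\mathcal A_{\mathrm{class}}$ separates the points of $\mathcal M_{\mathrm{reg}}$: for any two distinct points of $\mathcal M_{\mathrm{reg}}$ there is a function in $\mathcal A_{\mathrm{class}}$ taking distinct values at them.
   Context: Let $\Gamma=\mathbb{R}^{2(p+q)}$ with coordinates $(\boldsymbol u,\boldsymbol p,\boldsymbol v,\boldsymbol\pi)$, $\boldsymbol u,\boldsymbol p\in\mathbb{R}^p$, $\boldsymbol v,\boldsymbol\pi\in\mathbb{R}^q$. Let $\bar\Gamma$ be the set where $H_1=\tfrac12(\boldsymbol p^2-\boldsymbol v^2)$, $H_2=\tfrac12(\boldsymbol\pi^2-\boldsymbol u^2)$ and $D=\boldsymbol u\cdot\boldsymbol p-\boldsymbol v\cdot\boldsymbol\pi$ all vanish. ${\mathrm{SL}}(2,\mathbb{R})$ acts on $\Gamma$ by $(\boldsymbol u,\boldsymbol p)^T\mapsto g(\boldsymbol u,\boldsymbol p)^T$, $(\boldsymbol\pi,\boldsymbol v)^T\mapsto g(\boldsymbol\pi,\boldsymbol v)^T$ (componentwise on the pairs $(u_i,p_i)$, $(\pi_j,v_j)$), preserving $\bar\Gamma$. Let $\bar\Gamma_{\mathrm{reg}}$ be the set of points of $\bar\Gamma$ at which both pairs $(\boldsymbol u,\boldsymbol p)$ and $(\boldsymbol v,\boldsymbol\pi)$ are linearly independent, and $\mathcal M_{\mathrm{reg}}=\bar\Gamma_{\mathrm{reg}}/{\mathrm{SL}}(2,\mathbb{R})$.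 For $x_k=(u_k,p_k)$ ($1\le k\le p$) and $x_{p+k}=(\pi_k,v_k)$ ($1\le k\le q$), set $\mathcal O_{kj}=x_k\times x_j$ (scalar cross product on $\mathbb{R}^2$); these are gauge invariant and $\mathcal A_{\mathrm{class}}$ is the algebra of functions on $\mathcal M_{\mathrm{reg}}$ generated by them. *)

(* Defs.v *)
From HB Require Import structures.
From mathcomp Require Import all_boot all_order all_algebra.
From mathcomp Require Import reals.
Set Implicit Arguments. Unset Strict Implicit. Unset Printing Implicit Defensive.
Import Order.TTheory GRing.Theory Num.Theory.
Local Open Scope ring_scope.

Record phase (R : realType) (p q : nat) := Phase {
  pu  : 'I_p -> R;
  pp  : 'I_p -> R;
  pv  : 'I_q -> R;
  ppi : 'I_q -> R }.

Section Defs.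
Variables (R : realType) (p q : nat).
Implicit Types (z : phase R p q).

Definition H1 z : R := 2^-1 * (\sum_(i < p) pp z i ^+ 2 - \sum_(j < q) pv z j ^+ 2).
Definition H2 z : R := 2^-1 * (\sum_(j < q) ppi z j ^+ 2 - \sum_(i < p) pu z i ^+ 2).
Definition Dc z : R := \sum_(i < p) pu z i * pp z i - \sum_(j < q) pv z j * ppi z j.

Definition in_Gbar z : Prop := H1 z = 0 /\ H2 z = 0 /\ Dc z = 0.

Definition lin_indep2 (n : nat) (a b : 'I_n -> R) : Prop :=
  forall s t : R, (forall i, s * a i + t * b i = 0) -> s = 0 /\ t = 0.

Definition in_Greg z : Prop :=
  in_Gbar z /\ lin_indep2 (pu z) (pp z) /\ lin_indep2 (pv z) (ppi z).

(* SL(2,R) action: (u_i,p_i)^T |-> g (u_i,p_i)^T, (pi_j,v_j)^T |-> g (pi_j,v_j)^T *)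
Definition sl2_act (g : 'M[R]_2) z : phase R p q :=
  Phase (fun i => g ord0 ord0 * pu z i + g ord0 ord_max * pp z i)
        (fun i => g ord_max ord0 * pu z i + g ord_max ord_max * pp z i)
        (fun j => g ord_max ord0 * ppi z j + g ord_max ord_max * pv z j)
        (fun j => g ord0 ord0 * ppi z j + g ord0 ord_max * pv z j).

(* z and z' represent the same point of M_reg = Gbar_reg / SL(2,R) *)
Definition gauge_equiv z z' : Prop :=
  exists g : 'M[R]_2, \det g = 1 /\
    (forall i, pu z' i = pu (sl2_act g z) i /\ pp z' i = pp (sl2_act g z) i) /\
    (forall j, pv z' j = pv (sl2_act g z) j /\ ppi z' j = ppi (sl2_act g z) j).

(* x_k = (u_k, p_k) for k < p, x_{p+k} = (pi_k, v_k) *)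
Definition xvec z (k : 'I_(p + q)) : R * R :=
  match split k with
  | inl i => (pu z i, pp z i)
  | inr j => (ppi z j, pv z j)
  end.

Definition cross2 (a b : R * R) : R := a.1 * b.2 - a.2 * b.1.

Definition Oinv (k j : 'I_(p + q)) z : R := cross2 (xvec z k) (xvec z j).

Inductive in_Aclass : (phase R p q -> R) -> Prop :=
  | Acl_gen k j : in_Aclass (Oinv k j)
  | Acl_const c : in_Aclass (fun _ => c)
  | Acl_add f g : in_Aclass f -> in_Aclass g -> in_Aclass (fun z => f z + g z)
  | Acl_mul f g : in_Aclass f -> in_Aclass g -> in_Aclass (fun z => f z * g z).

End Defs.

(* Main.v *)
Require Import Defs.
From HB Require Import structures.
From mathcomp Require Import all_boot all_order all_algebra.
From mathcomp Require Import reals.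
From mathcomp Require Import ring.
Import Order.TTheory GRing.Theory Num.Theory.
Local Open Scope ring_scope.

Lemma det22 (R : comNzRingType) (A : 'M[R]_2) :
  \det A = A ord0 ord0 * A ord_max ord_max - A ord0 ord_max * A ord_max ord0.
Proof.
rewrite (expand_det_row _ ord0) !big_ord_recl big_ord0 /cofactor !det_mx11 /= !mxE.
rewrite /= !expr0 expr1 addr0.
have -> : lift ord0 0 = ord_max :> 'I_2 by apply/val_inj.
have -> : lift ord_max 0 = ord0 :> 'I_2 by apply/val_inj.
ring.
Qed.

Lemma minor_ex (R : realType) n (a b : 'I_n -> R) :
  lin_indep2 a b -> exists i j, a i * b j - b i * a j != 0.
Proof.
move=> H.
case: (boolP [exists i, [exists j, a i * b j - b i * a j != 0]]).
  by move/existsP => [i /existsP [j Hij]]; exists i, j.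
move=> /existsPn Hn.
have Hm : forall i j, a i * b j - b i * a j = 0.
  move=> i j; move: (Hn i) => /existsPn /(_ j); by rewrite negbK => /eqP.
case: (boolP [exists i, a i != 0]).
  move/existsP => [i0 Hi0].
  have Hs : forall i, b i0 * a i + - a i0 * b i = 0.
    move=> i; have -> : b i0 * a i + - a i0 * b i = -(a i0 * b i - b i0 * a i) by ring.
    by rewrite Hm oppr0.
  have [_ Ht] := H (b i0) (- a i0) Hs.
  by exfalso; move/eqP: Hi0; apply; rewrite -[a i0]opprK Ht oppr0.
move=> /existsPn Ha.
have Hs : forall i, 1 * a i + 0 * b i = 0.
  by move=> i; move: (Ha i); rewrite negbK => /eqP ->; ring.
have [H1 _] := H 1 0 Hs.
by exfalso; move/eqP: (oner_neq0 R); rewrite H1.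
Qed.

Lemma key (R : realType) (a0 b0 a1 b1 c0 d0 c1 d1 a b c d : R) :
  a0*b1 - b0*a1 != 0 ->
  c0*d1 - d0*c1 = a0*b1 - b0*a1 ->
  a*b1 - b*a1 = c*d1 - d*c1 ->
  a0*b - b0*a = c0*d - d0*c ->
  c = (c0*b1 - c1*b0)/(a0*b1 - b0*a1) * a + (c1*a0 - c0*a1)/(a0*b1 - b0*a1) * b /\
  d = (d0*b1 - d1*b0)/(a0*b1 - b0*a1) * a + (d1*a0 - d0*a1)/(a0*b1 - b0*a1) * b.
Proof.
move=> HD Hy H3 H4.
have e1 : c * (c0*d1 - d0*c1) = c0*(c*d1 - d*c1) + c1*(c0*d - d0*c) by ring.
have e2 : d * (c0*d1 - d0*c1) = d0*(c*d1 - d*c1) + d1*(c0*d - d0*c) by ring.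
rewrite Hy -H3 -H4 in e1 e2.
split.
  have -> : c = c * (a0*b1 - b0*a1) / (a0*b1 - b0*a1) by field.
  rewrite e1; field; done.
have -> : d = d * (a0*b1 - b0*a1) / (a0*b1 - b0*a1) by field.
rewrite e2; field; done.
Qed.

Theorem mainTheorem5 (R : realType) (p q : nat) :
  (2 <= p)%N -> (2 <= q)%N ->
  forall x y : phase R p q,
    in_Greg x -> in_Greg y -> ~ gauge_equiv x y ->
    exists f : phase R p q -> R, in_Aclass f /\ f x <> f y.
Proof.
move=> _ _ x y [_ [Hx _]] _ Hne.
case: (boolP [exists k, [exists j, Oinv k j x != Oinv k j y]]).
  move/existsP => [k /existsP [j Hkj]].
  by exists (Oinv k j); split; [constructor | apply/eqP].
move=> /existsPn Hn; exfalso; apply: Hne.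
have HO : forall k j, Oinv k j x = Oinv k j y.
  move=> k j; move: (Hn k) => /existsPn /(_ j); by rewrite negbK => /eqP.
have sl : forall i : 'I_p, split (lshift q i) = inl i by move=> i; exact: (unsplitK (inl i)).
have sr : forall j : 'I_q, split (rshift p j) = inr j by move=> j; exact: (unsplitK (inr j)).
have LL : forall (z : phase R p q) (i j : 'I_p), Oinv (lshift q i) (lshift q j) z = pu z i * pp z j - pp z i * pu z j.
  by move=> z i j; rewrite /Oinv /xvec !sl.
have LR : forall (z : phase R p q) (i : 'I_p) (j : 'I_q), Oinv (lshift q i) (rshift p j) z = pu z i * pv z j - pp z i * ppi z j.
  by move=> z i j; rewrite /Oinv /xvec sl sr.
have RL : forall (z : phase R p q) (j : 'I_q) (i : 'I_p), Oinv (rshift p j) (lshift q i) z = ppi z j * pp z i - pv z j * pu z i.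
  by move=> z j i; rewrite /Oinv /xvec sl sr.
have [i0 [j0 HD]] := @minor_ex R p _ _ Hx.
set a0 := pu x i0; set b0 := pp x i0; set a1 := pu x j0; set b1 := pp x j0.
set c0 := pu y i0; set d0 := pp y i0; set c1 := pu y j0; set d1 := pp y j0.
set D := a0*b1 - b0*a1.
have Hy : c0*d1 - d0*c1 = D by rewrite /D -!LL HO.
pose g : 'M[R]_2 := \matrix_(r < 2, s < 2)
  if r == ord0 then (if s == ord0 then (c0*b1 - c1*b0)/D else (c1*a0 - c0*a1)/D)
  else (if s == ord0 then (d0*b1 - d1*b0)/D else (d1*a0 - d0*a1)/D).
have g00 : g ord0 ord0 = (c0*b1 - c1*b0)/D by rewrite mxE.
have g01 : g ord0 ord_max = (c1*a0 - c0*a1)/D by rewrite mxE.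
have g10 : g ord_max ord0 = (d0*b1 - d1*b0)/D by rewrite mxE.
have g11 : g ord_max ord_max = (d1*a0 - d0*a1)/D by rewrite mxE.
exists g; split; [|split].
- rewrite det22 g00 g01 g10 g11.
  have HD' : D != 0 by [].
  have -> : (c0 * b1 - c1 * b0) / D * ((d1 * a0 - d0 * a1) / D) -
    (c1 * a0 - c0 * a1) / D * ((d0 * b1 - d1 * b0) / D) = (c0*d1 - d0*c1) * D / (D*D).
    rewrite /D; field; done.
  by rewrite Hy divff // mulf_neq0.
- move=> i; rewrite /sl2_act /= g00 g01 g10 g11.
  apply: key => //.
    by rewrite -!LL HO.
  by rewrite -!LL HO.
- move=> j; rewrite /sl2_act /= g00 g01 g10 g11.
  have [-> ->] : ppi y j = (c0*b1 - c1*b0)/D * ppi x j + (c1*a0 - c0*a1)/D * pv x j /\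
        pv y j = (d0*b1 - d1*b0)/D * ppi x j + (d1*a0 - d0*a1)/D * pv x j.
    apply: key => //.
      by rewrite /a1 /b1 /c1 /d1 -!RL HO.
    by rewrite /a0 /b0 /c0 /d0 -!LR HO.
  by split.
Qed.
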